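(* Let $k\ge 2$ and $1\le l_1\le l_2\le\cdots\le l_k$ be integers. If the generalized theta graph $\Theta_{l_1,l_2,\dots,l_k}$ is cyclically orderable, then $$\frac{\sum_{i=1}^{t} l_i}{t-1}\ \ge\ \frac{\sum_{i=1}^{k} l_i}{k-1}$$ for every integer $t$ with $2\le t\le k$.
   Context: The generalized theta graph $\Theta_{l_1,\dots,l_k}$ (with $l_1\le\cdots\le l_k$) is the graph obtained by joining two distinct vertices by $k$ internally vertex-disjoint paths of lengths $l_1,l_2,\dots,l_k$. A cyclic base ordering (CBO) of a connected graph $G$ is a bijection $\mathcal{O}:E(G)\to\{1,\dots,|E(G)|\}$ such that for every $i\in\{1,\dots,|E(G)|\}$ the edges $\mathcal{O}^{-1}(i),\dots,\mathcal{O}^{-1}(i+|V(G)|-2)$ (indices taken cyclically modulo $|E(G)|$) induce a spanning tree of $G$; $G$ is cyclically orderable if it has a CBO. *)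

(* Defs.v *)
From mathcomp Require Import all_boot all_order all_algebra.
Set Implicit Arguments. Unset Strict Implicit. Unset Printing Implicit Defensive.

Section Graphs.
Variables (T E : finType) (VS : {set T}) (ends : E -> T * T).

Definition sadj (S : {set E}) : rel T :=
  fun x y => [exists e in S, (ends e == (x, y)) || (ends e == (y, x))].

Definition sub_connected (S : {set E}) : Prop :=
  forall x y, x \in VS -> y \in VS -> connect (sadj S) x y.

Definition sub_acyclic (S : {set E}) : Prop :=
  forall e, e \in S -> ~~ connect (sadj (S :\ e)) (ends e).1 (ends e).2.

Definition spanning_tree (S : {set E}) : Prop :=
  sub_connected S /\ sub_acyclic S.

(* O : E -> 'I_|E| bijection; the window starting at position i consists of the
   edges at positions i, i+1, ..., i+|V|-2 (cyclically mod |E|). *)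
Definition cbo_window (O : E -> 'I_#|E|) (i : nat) : {set E} :=
  [set e | (O e + #|E| - i) %% #|E| < #|VS| - 1].

Definition is_CBO (O : E -> 'I_#|E|) : Prop :=
  bijective O /\ forall i : 'I_#|E|, spanning_tree (cbo_window O i).

Definition cyclically_orderable : Prop := exists O : E -> 'I_#|E|, is_CBO O.

End Graphs.

(* Generalized theta graph Theta_{l_0,...,l_{k-1}}: two poles (inl false),
   (inl true) joined by k internally disjoint paths; path i has length l i,
   internal vertices inr (i, j) with 0 < j < l i. *)
Section Theta.
Variables (k : nat) (l : 'I_k -> nat).

Definition thM := (\max_(i < k) l i).+1.
Definition thT : finType := (bool + ('I_k * 'I_thM))%type.

Definition thVS : {set thT} :=
  [set x : thT | match x with
                 | inl _ => true
                 | inr p => (0 < p.2) && (p.2 < l p.1) end].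

Definition thE : finType := {p : 'I_k * 'I_thM | p.2 < l p.1}.

Definition thvert (i : 'I_k) (j : nat) : thT :=
  if j == 0 then inl false
  else if j == l i then inl true
  else inr (i, inord j).

Definition thends (e : thE) : thT * thT :=
  (thvert (val e).1 (val e).2, thvert (val e).1 (val e).2.+1).

Definition theta_cyclically_orderable : Prop :=
  cyclically_orderable thVS thends.

End Theta.

(* Main.v *)
Require Import Defs.
From mathcomp Require Import all_boot all_order all_algebra.
From mathcomp Require Import zify.
Import Order.TTheory GRing.Theory Num.Theory.
Set Implicit Arguments. Unset Strict Implicit.

Lemma sum_ind_ord (M a b : nat) :
  \sum_(j < M) ((a <= j) && (j < b) : nat) = minn b M - a.
Proof.
elim: M => [|M IH]; first by rewrite big_ord0; lia.
rewrite big_ord_recr /= IH.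
case: (ltnP M b) => hb.
  case: (leqP a M) => ha /=; rewrite ?andbT ?andbF /=; lia.
by rewrite andbF addn0; lia.
Qed.

Section Th.
Variables (k : nat) (l : 'I_k -> nat).

Lemma l_lt i : l i < thM l.
Proof. by rewrite /thM ltnS (@leq_bigmax _ (fun i => l i) i). Qed.

Lemma sum_thE (F : 'I_k * 'I_(thM l) -> nat) :
  \sum_(e : thE l) F (val e) = \sum_(x : 'I_k * 'I_(thM l) | x.2 < l x.1) F x.
Proof.
rewrite (reindex_omap (val : thE l -> _) insub); last first.
  by move=> i Pi; rewrite insubT.
by apply: eq_bigl=> -[i iA]/=; rewrite insubT ?iA /= eqxx.
Qed.

Lemma sum_thE_G (G : 'I_k -> nat) :
  \sum_(e : thE l) G (val e).1 = \sum_i G i * l i.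
Proof.
rewrite (sum_thE (fun x => G x.1)) big_mkcond /=.
rewrite -(pair_bigA _ (fun i (j : 'I_(thM l)) => if j < l i then G i else 0)) /=.
apply: eq_bigr => i _.
rewrite (eq_bigr (fun j : 'I_(thM l) => ((0 <= j) && (j < l i) : nat) * G i)); last first.
  by move=> j _; case: ifP => //=; rewrite mul1n.
have H := sum_ind_ord (thM l) 0 (l i); simpl in H.
rewrite -big_distrl /= H subn0 mulnC.
by rewrite (minn_idPl (ltnW (l_lt i))).
Qed.

Lemma card_VS : #|thVS l| = 2 + \sum_i (l i).-1.
Proof.
rewrite -sum1_card big_mkcond /= big_sumType /=.
rewrite (eq_bigr (fun _ => 1)); last by move=> b _; rewrite inE.
rewrite sum_nat_const card_bool /=.
congr (_ + _).
rewrite (eq_bigr (fun p : 'I_k * 'I_(thM l) => ((0 < p.2) && (p.2 < l p.1) : nat))); last first.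
  by move=> [i j] _; rewrite inE.
rewrite -(pair_bigA _ (fun i (j : 'I_(thM l)) => ((0 < j) && (j < l i) : nat))) /=.
apply: eq_bigr => i _.
rewrite sum_ind_ord (minn_idPl (ltnW (l_lt i))); lia.
Qed.

Lemma mkE_proof p c (h : c < l p) : ((p, inord c) : 'I_k * 'I_(thM l)).2 < l (p, inord c : 'I_(thM l)).1.
Proof. by rewrite /= inordK // (ltn_trans h (l_lt p)). Qed.

Definition mkE p c (h : c < l p) : thE l := exist _ (p, inord c) (mkE_proof h).

Lemma mkE2 p c (h : c < l p) : nat_of_ord (val (mkE h)).2 = c.
Proof. by rewrite /= inordK // (ltn_trans h (l_lt p)). Qed.

Lemma sadj_sym (S : {set thE l}) : symmetric (sadj (@thends k l) S).
Proof. by move=> x y; apply: eq_existsb => e; rewrite orbC. Qed.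

Lemma path_conn (S : {set thE l}) p a b : a <= b <= l p ->
  (forall e : thE l, (val e).1 = p -> a <= (val e).2 < b -> e \in S) ->
  connect (sadj (@thends k l) S) (thvert l p a) (thvert l p b).
Proof.
elim: b => [|b IH] /andP [hab hb] hS.
  have -> : a = 0 by lia.
  exact: connect0.
have [->|hlt] : a = b.+1 \/ a <= b by lia.
  exact: connect0.
apply: (connect_trans (IH _ _)); first by lia.
  by move=> e he hr; apply: hS => //; lia.
have hb' : b < l p by lia.
apply: connect1; apply/existsP; exists (mkE hb').
rewrite hS //=; last by rewrite inordK ?(ltn_trans hb' (l_lt p)) //; lia.
by rewrite /thends /= inordK ?(ltn_trans hb' (l_lt p)) // eqxx.
Qed.

Definition full (W : {set thE l}) (p : 'I_k) :=
  [forall e : thE l, ((val e).1 == p) ==> (e \in W)].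

Lemma two_full (W : {set thE l}) p q : (forall i, 1 <= l i) ->
  sub_acyclic (@thends k l) W -> p != q -> full W p -> full W q -> False.
Proof.
move=> hl hac pq fp fq.
have h0 : 0 < l p := hl p.
have e0W : mkE h0 \in W by have := forallP fp (mkE h0); rewrite eqxx.
have := hac _ e0W; move/negP; apply.
rewrite /thends /= inordK; last by rewrite (ltn_trans h0 (l_lt p)).
set S := W :\ mkE h0.
have c1 : connect (sadj (@thends k l) S) (thvert l q 0) (thvert l q (l q)).
  apply: path_conn; first by rewrite leq0n leqnn.
  move=> e he _; rewrite !inE; apply/andP; split.
    apply/eqP => E; move: he; rewrite E /= => E'.
    by move: pq; rewrite E' eqxx.
  by have := forallP fq e; rewrite he eqxx.
have c2 : connect (sadj (@thends k l) S) (thvert l p 1) (thvert l p (l p)).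
  apply: path_conn; first by rewrite hl leqnn.
  move=> e he /andP [h1 _]; rewrite !inE; apply/andP; split.
    apply/eqP => E; move: h1; rewrite E mkE2.
    by [].
  by have := forallP fp e; rewrite he eqxx.
have Eq0 : thvert l p 0 = thvert l q 0 by [].
have Eql : thvert l q (l q) = thvert l p (l p).
  rewrite /thvert.
  have -> : (l q == 0) = false by apply/negbTE; rewrite -lt0n hl.
  have -> : (l p == 0) = false by apply/negbTE; rewrite -lt0n hl.
  by rewrite !eqxx.
rewrite Eq0; apply: (connect_trans c1); rewrite Eql.
by rewrite (sym_connect_sym (@sadj_sym S)).
Qed.

Lemma win_bound (W : {set thE l}) t : (forall i, 1 <= l i) ->
  sub_acyclic (@thends k l) W -> t <= k ->
  t - 1 <= \sum_(e : thE l | (val e).1 < t) (e \notin W : nat).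
Proof.
move=> hl hac htk.
rewrite (partition_big (fun e : thE l => (val e).1) (fun p : 'I_k => p < t)) //.
apply: (@leq_trans (\sum_(p : 'I_k | p < t) (~~ full W p : nat))); last first.
  apply: leq_sum => p hp; case fp: (full W p) => //=.
  move/negbT: fp; rewrite negb_forall => /existsP [e]; rewrite negb_imply => /andP [/eqP ep eW].
  rewrite (bigD1 e) /=; last by rewrite ep hp eqxx.
  by rewrite eW.
have hsum : \sum_(p : 'I_k | p < t) 1 = t.
  rewrite big_mkcond /=.
  have H := sum_ind_ord k 0 t; simpl in H.
  rewrite (eq_bigr (fun p : 'I_k => (p < t : nat))); last by move=> p _; case: ifP.
  by rewrite H subn0 (minn_idPl htk).
have hfull : \sum_(p : 'I_k | p < t) (full W p : nat) <= 1.
  case: (pickP (fun p : 'I_k => (p < t) && full W p)) => [p0 /andP [hp0 fp0]|none].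
    rewrite (bigD1 p0) //= fp0 big1 //.
    move=> p /andP [_ pp0]; case fp: (full W p) => //.
    by case: (two_full hl hac pp0 fp fp0).
  by rewrite big1 // => p hp; have := none p; rewrite hp /=; case: (full W p).
have hs : \sum_(p : 'I_k | p < t) 1 = \sum_(p : 'I_k | p < t) (full W p : nat) + \sum_(p : 'I_k | p < t) (~~ full W p : nat).
  by rewrite -big_split /=; apply: eq_bigr => p _; case: (full W p).
lia.
Qed.

Lemma modh m a i : a < m -> i < m ->
  (a + m - i) %% m = if i <= a then a - i else a + m - i.
Proof.
move=> ha hi; case: ifP => hia.
  have -> : a + m - i = (a - i) + m by lia.
  by rewrite modnDr modn_small //; lia.
by rewrite modn_small //; lia.
Qed.

Lemma col_count m a r : a < m -> r <= m ->
  \sum_(i < m) (r <= (a + m - i) %% m : nat) = m - r.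
Proof.
move=> ha hr.
have m0 : 0 < m by lia.
pose h (i : 'I_m) : 'I_m := Ordinal (ltn_pmod (a + m - i) m0).
have hh : involutive h.
  move=> i; apply: val_inj => /=.
  have hi := ltn_ord i.
  rewrite (modh ha hi).
  case: ifP => hia.
    rewrite modh //; last by lia.
    case: leqP => h'; lia.
  rewrite modh //; last by lia.
  case: leqP => h'; lia.
have hinj : injective h by apply: inv_inj.
rewrite (eq_bigr (fun i => (r <= h i : nat))) //.
have E := reindex_inj hinj (P := xpredT) (F := fun j : 'I_m => (r <= j : nat)); simpl in E; rewrite -E.
have H := sum_ind_ord m r m.
rewrite (eq_bigr (fun j : 'I_m => ((r <= j) && (j < m) : nat))); last by move=> j _; rewrite ltn_ord andbT.
by rewrite H minnn.
Qed.
End Th.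

Unset Implicit Arguments.
Set Strict Implicit.

Theorem mainTheorem8 (k : nat) (l : 'I_k -> nat) :
  2 <= k ->
  (forall i, 1 <= l i) ->
  (forall i j : 'I_k, i <= j -> l i <= l j) ->
  theta_cyclically_orderable l ->
  forall t : nat, 2 <= t <= k ->
    ((\sum_(i < k) (l i)%:R) / (k.-1)%:R
       <= (\sum_(i < k | (i < t)%N) (l i)%:R) / (t.-1)%:R :> rat)%R.
Proof.
move=> hk hl _ [O [_ hO]] t /andP [ht2 htk].
have Sm : #|thE l| = \sum_i l i.
  have := sum_thE_G l (fun _ => 1).
  rewrite sum_nat_const muln1 => E.
  have E2 : \sum_i l i = \sum_i 1 * l i by apply: eq_bigr => i _; rewrite mul1n.
  by rewrite E2 -E.
have Sk : \sum_i (l i).-1 + k = \sum_i l i.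
  have E1 : \sum_(i < k) 1 = k by rewrite sum_nat_const card_ord muln1.
  transitivity (\sum_i (l i).-1 + \sum_(i < k) 1); first by rewrite E1.
  by rewrite -big_split /=; apply: eq_bigr => i _; have := hl i; lia.
have hV := card_VS l.
have col : forall e : thE l,
    \sum_(i < #|thE l|) (e \notin cbo_window (thVS l) O i : nat) = k - 1.
  move=> e.
  have ha := ltn_ord (O e).
  rewrite (eq_bigr (fun i : 'I_#|thE l| => (#|thVS l| - 1 <= (O e + #|thE l| - i) %% #|thE l| : nat))); last first.
    by move=> i _; rewrite inE -leqNgt.
  rewrite col_count //; lia.
have key : #|thE l| * (t - 1) <= (\sum_(i < k | i < t) l i) * (k - 1).
  have -> : #|thE l| * (t - 1) = \sum_(i < #|thE l|) (t - 1) by rewrite sum_nat_const card_ord.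
  apply: (@leq_trans (\sum_(i < #|thE l|) \sum_(e : thE l | (val e).1 < t) (e \notin cbo_window (thVS l) O i : nat))).
    apply: leq_sum => i _; apply: win_bound => //.
    by case: (hO i).
  rewrite exchange_big /=.
  rewrite (eq_bigr (fun _ => k - 1)); last by move=> e _; exact: col.
  have E := sum_thE_G l (fun i => (i < t) * (k-1)).
  have E' : \sum_(e : thE l | (sval e).1 < t) (k - 1) = \sum_(e : thE l) ((val e).1 < t) * (k-1).
    rewrite big_mkcond; apply: eq_bigr => e _; rewrite -[val e]/(sval e); case: ifP => h /=; [by rewrite mul1n | by rewrite mul0n].

  rewrite E' E big_distrl /= big_mkcond /=.
  apply: eq_leq; rewrite [RHS]big_mkcond; apply: eq_bigr => i _; case: ifP => _ /=; [by rewrite mul1n mulnC | by rewrite !mul0n].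
rewrite -!natr_sum.
have k0 : (0 < (k.-1)%:R :> rat)%R by rewrite ltr0n; lia.
have t0 : (0 < (t.-1)%:R :> rat)%R by rewrite ltr0n; lia.
rewrite ler_pdivrMr // mulrAC ler_pdivlMr // -!natrM ler_nat.
rewrite -Sm.
have -> : k.-1 = k - 1 by lia.
have -> : t.-1 = t - 1 by lia.
exact: key.
Qed.
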